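(* For every integer $n\ge 3$, $$M^L(n)\ \ge\ \frac{3\cdot 2^n}{3n-2}.$$
   Context: $\mathbb{F}=\{0,1\}$. The binary $n$-dimensional hypercube $\mathbb{F}^n$ is the graph on $\mathbb{F}^n$ where two words are adjacent iff their Hamming distance is $1$. For a nonempty $C\subseteq\mathbb{F}^n$, $I(\mathbf{x})=N[\mathbf{x}]\cap C$ with $N[\mathbf{x}]$ the words at Hamming distance $\le1$ from $\mathbf{x}$. $C$ is a local identifying code if $I(\mathbf{x})\ne\emptyset$ for all $\mathbf{x}$ and $I(\mathbf{x})\ne I(\mathbf{y})$ for all adjacent $\mathbf{x},\mathbf{y}$. $M^L(n)$ is the minimum cardinality of a local identifying code in $\mathbb{F}^n$. *)

(* Defs.v *)
From mathcomp Require Import all_boot all_order all_algebra.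
Set Implicit Arguments. Unset Strict Implicit. Unset Printing Implicit Defensive.

Definition word (n : nat) := {ffun 'I_n -> bool}.

Definition hamming (n : nat) (x y : word n) : nat := #|[set i | x i != y i]|.

Definition closed_nbhd (n : nat) (x : word n) : {set word n} :=
  [set y | hamming x y <= 1].

Definition I_set (n : nat) (C : {set word n}) (x : word n) : {set word n} :=
  closed_nbhd x :&: C.

Definition local_identifying_code (n : nat) (C : {set word n}) : Prop :=
  C != set0 /\
  (forall x : word n, I_set C x != set0) /\
  (forall x y : word n, hamming x y = 1 -> I_set C x != I_set C y).

(* Main.v *)
Require Import Defs.
From mathcomp Require Import all_boot all_order all_algebra.
From mathcomp Require Import zify.
Set Implicit Arguments. Unset Strict Implicit.
Import GRing.Theory Num.Theory.
Local Open Scope ring_scope.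

Section Aux.
Local Open Scope nat_scope.
Variable n : nat.
Implicit Types x y : word n.

Definition flip x (i : 'I_n) : word n :=
  [ffun j => if j == i then ~~ x i else x j].

Lemma flipE x i j : flip x i j = if j == i then ~~ x i else x j.
Proof. by rewrite ffunE. Qed.

Lemma hamming_sym x y : hamming x y = hamming y x.
Proof. by rewrite /hamming; apply: eq_card => i; rewrite !inE eq_sym. Qed.

Lemma hamming0 x y : hamming x y = 0 -> x = y.
Proof.
move/cards0_eq => H; apply/ffunP => i.
apply/eqP; apply/negPn/negP => Hi.
have : i \in [set i | x i != y i] by rewrite inE.
by rewrite H inE.
Qed.

Lemma hamming_xx x : hamming x x = 0.
Proof.
rewrite /hamming; apply/eqP; rewrite cards_eq0; apply/eqP/setP => i.
by rewrite !inE eqxx.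
Qed.

Lemma hamming_flip x i : hamming x (flip x i) = 1.
Proof.
rewrite /hamming (_ : [set j | x j != flip x i j] = [set i]) ?cards1 //.
apply/setP => j; rewrite !inE flipE; case: (eqVneq j i) => [->|] /=.
  by case: (x i).
by rewrite eqxx.
Qed.

Lemma hamming1 x y : hamming x y = 1 -> exists i, y = flip x i.
Proof.
move/eqP/cards1P => [i Hi]; exists i; apply/ffunP => j; rewrite flipE.
have : (x j != y j) = (j == i) by rewrite -in_set1 -Hi inE.
case: (eqVneq j i) => [->|_] /=.
  by case: (x i); case: (y i).
by move/negbFE/eqP ->.
Qed.

Lemma flipK x i : flip (flip x i) i = x.
Proof.
apply/ffunP => j; rewrite !flipE eqxx; case: (eqVneq j i) => [->|//].
by rewrite negbK.
Qed.

Lemma flip_neq x i : flip x i != x.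
Proof. by apply/negP => /eqP/ffunP/(_ i); rewrite flipE eqxx; case: (x i). Qed.

Lemma flip_inj x : injective (flip x).
Proof.
move=> i j /ffunP/(_ i); rewrite !flipE eqxx.
by case: (eqVneq i j) => // _; case: (x i).
Qed.

Lemma hamming_flip2 x y j : hamming (flip x j) (flip y j) = hamming x y.
Proof.
rewrite /hamming; apply: eq_card => k; rewrite !inE !flipE.
by case: (eqVneq k j) => [->|]; first by case: (x j); case: (y j).
Qed.

Lemma nbhdE x : closed_nbhd x = x |: [set flip x i | i : 'I_n].
Proof.
apply/setP => y; rewrite /closed_nbhd !inE; apply/idP/idP.
  case H: (hamming x y) => [|[|m]] // _.
    by rewrite (hamming0 H) eqxx.
  case: (hamming1 H) => i ->; apply/orP; right; apply/imsetP; by exists i.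
case/orP => [/eqP->|/imsetP[i _ ->]]; by rewrite ?hamming_xx ?hamming_flip.
Qed.

Lemma notin_img x : x \notin [set flip x i | i : 'I_n].
Proof.
apply/imsetP => [[i _ /eqP]]; by rewrite eq_sym (negbTE (flip_neq x i)).
Qed.

Lemma card_nbhd x : #|closed_nbhd x| = n.+1.
Proof.
rewrite nbhdE cardsU1 notin_img card_imset ?card_ord //; exact: flip_inj.
Qed.

Lemma nbhd_sym x y : (y \in closed_nbhd x) = (x \in closed_nbhd y).
Proof. by rewrite /closed_nbhd !inE hamming_sym. Qed.

End Aux.

Section Main.
Local Open Scope nat_scope.
Variable n : nat.
Implicit Types x y : word n.

Definition s (m : nat) : nat := if m <= 1 then 0 else if m == 2 then 3 else 4.

Lemma s_ge2 m : 1 < m -> 3 <= s m.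
Proof. by rewrite /s; case: m => [|[|[|m]]]. Qed.

Lemma s_ge3 m : 2 < m -> 4 <= s m.
Proof. by rewrite /s; case: m => [|[|[|m]]]. Qed.

Lemma s_bound m : 0 < m -> 6 + m * s m <= 6 * m.
Proof. rewrite /s; case: m => [|[|[|m]]] //= _; lia. Qed.

Lemma card_ge2 (T : finType) (A : {set T}) a b :
  a \in A -> b \in A -> a != b -> 1 < #|A|.
Proof.
move=> Ha Hb ab; rewrite (cardsD1 a) Ha add1n ltnS.
by apply/card_gt0P; exists b; rewrite !inE eq_sym ab.
Qed.

Lemma card_ge3 (T : finType) (A : {set T}) a b d :
  a \in A -> b \in A -> d \in A -> a != b -> a != d -> b != d -> 2 < #|A|.
Proof.
move=> Ha Hb Hd ab ad bd; rewrite (cardsD1 a) Ha add1n ltnS.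
by apply: (card_ge2 (a:=b) (b:=d)); rewrite // !inE eq_sym ?ab ?ad.
Qed.

Lemma card_ne1 (T : finType) (A : {set T}) a :
  a \in A -> A != [set a] -> 1 < #|A|.
Proof.
move=> Ha Hne; rewrite ltnNge; apply: contra Hne => H.
by rewrite eq_sym eqEcard sub1set Ha cards1 H.
Qed.

Lemma sum2 (F : 'I_n -> nat) (P : pred 'I_n) i j :
  i \in P -> j \in P -> i != j -> F i + F j <= \sum_(l in P) F l.
Proof.
move=> Hi Hj ij; rewrite (bigD1 i) //= (bigD1 j) /=; last by rewrite Hj eq_sym ij.
by rewrite addnA leq_addr.
Qed.

Lemma T_bound (C : {set word n}) c : local_identifying_code C -> c \in C ->
  minn (3*n) 10 <= \sum_(x in closed_nbhd c) s #|I_set C x|.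
Proof.
case=> _ [Hdom Hid] Hc.
have inI x y : (y \in I_set C x) = (hamming x y <= 1) && (y \in C).
  by rewrite /I_set in_setI /closed_nbhd inE.
rewrite nbhdE big_setU1 /=; last exact: notin_img.
rewrite big_imset /=; last by move=> i j _ _; apply: flip_inj.
case: (boolP [exists y, (y \in C) && (hamming c y == 1)]) =>
   [/existsP [c' /andP [Hc' /eqP Hcc']] | /existsPn Hiso].
- case: (hamming1 Hcc') => i Ei.
  case: (boolP [exists y, [&& y \in C, hamming c y == 1 & y != c']]) =>
     [/existsP [c'' /and3P [Hc'' /eqP Hcc'' Hne]] | /existsPn Hno].
  + case: (hamming1 Hcc'') => j Ej.
    have ij : i != j by apply: contra Hne => /eqP ij; rewrite Ej Ei ij.
    apply: leq_trans (geq_minr _ _) _.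
    have H1 : 4 <= s #|I_set C c|.
      apply: s_ge3; apply: (card_ge3 (a:=c) (b:=c') (d:=c'')).
      - by rewrite inI hamming_xx Hc.
      - by rewrite inI Hcc' Hc'.
      - by rewrite inI Hcc'' Hc''.
      - by rewrite Ei eq_sym flip_neq.
      - by rewrite Ej eq_sym flip_neq.
      - by rewrite eq_sym.
    have H2 : 3 <= s #|I_set C (flip c i)|.
      apply: s_ge2; apply: (card_ge2 (a:=c) (b:=flip c i)).
      - by rewrite inI hamming_sym hamming_flip Hc.
      - by rewrite inI hamming_xx -Ei Hc'.
      - by rewrite eq_sym flip_neq.
    have H3 : 3 <= s #|I_set C (flip c j)|.
      apply: s_ge2; apply: (card_ge2 (a:=c) (b:=flip c j)).
      - by rewrite inI hamming_sym hamming_flip Hc.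
      - by rewrite inI hamming_xx -Ej Hc''.
      - by rewrite eq_sym flip_neq.
    rewrite (bigD1 i) //= (bigD1 j) /=; last by rewrite eq_sym ij.
    exact: (leq_trans _ (leq_add H1 (leq_add H2 (leq_trans H3 (leq_addr _ _))))).
  + have Icsub : I_set C c \subset I_set C c'.
      apply/subsetP => y; rewrite !inI => /andP [Hh Hy]; rewrite Hy andbT.
      case Hh' : (hamming c y) Hh => [|[|m]] // _.
        by rewrite -(hamming0 Hh') hamming_sym Hcc'.
      have := Hno y; rewrite Hy Hh' eqxx /= negbK => /eqP ->.
      by rewrite hamming_xx.
    have Hns : ~~ (I_set C c' \subset I_set C c).
      apply: contra (Hid _ _ Hcc') => Hs; by rewrite eqEsubset Icsub Hs.
    case/subsetPn: Hns => z Hz Hzn.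
    move: (Hz); rewrite inI => /andP [Hzh HzC].
    have zc' : z != c'.
      apply: contra Hzn => /eqP ->; by rewrite inI Hcc' Hc'.
    have zc : z != c.
      apply: contra Hzn => /eqP ->; by rewrite inI hamming_xx Hc.
    have Hz1 : hamming c' z = 1.
      case Hh' : (hamming c' z) Hzh => [|[|m]] // _.
      by move: zc'; rewrite -(hamming0 Hh') eqxx.
    case: (hamming1 Hz1) => j Ej.
    have Ec : c = flip c' i by rewrite Ei flipK.
    have ij : i != j by apply: contra zc => /eqP ij; rewrite Ej Ec ij.
    apply: leq_trans (geq_minr _ _) _.
    have H1 : 3 <= s #|I_set C c|.
      apply: s_ge2; apply: (card_ge2 (a:=c) (b:=c')).
      - by rewrite inI hamming_xx Hc.
      - by rewrite inI Hcc' Hc'.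
      - by rewrite Ei eq_sym flip_neq.
    have H2 : 4 <= s #|I_set C (flip c i)|.
      rewrite -Ei; apply: s_ge3; apply: (card_ge3 (a:=c) (b:=c') (d:=z)) => //.
      - by rewrite inI hamming_sym Hcc' Hc.
      - by rewrite inI hamming_xx Hc'.
      - by rewrite Ei eq_sym flip_neq.
      - by rewrite eq_sym.
      - by rewrite eq_sym.
    have H3 : 3 <= s #|I_set C (flip c j)|.
      apply: s_ge2; apply: (card_ge2 (a:=c) (b:=z)).
      - by rewrite inI hamming_sym hamming_flip Hc.
      - by rewrite inI HzC andbT Ej hamming_flip2 Ei hamming_flip.
      - by rewrite eq_sym.
    rewrite (bigD1 i) //= (bigD1 j) /=; last by rewrite eq_sym ij.
    exact: (leq_trans _ (leq_add H1 (leq_add H2 (leq_trans H3 (leq_addr _ _))))).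
- have Ic : I_set C c = [set c].
    apply/setP => y; rewrite inI inE; apply/idP/idP.
      move=> /andP [Hh Hy]; case Hh' : (hamming c y) Hh => [|[|m]] // _.
        by rewrite (hamming0 Hh') eqxx.
      by move: (Hiso y); rewrite Hy Hh' eqxx.
    by move/eqP ->; rewrite hamming_xx Hc.
  have F3 i : 3 <= s #|I_set C (flip c i)|.
    apply: s_ge2; apply: (card_ne1 (a:=c)).
      by rewrite inI hamming_sym hamming_flip Hc.
    by rewrite -Ic eq_sym; apply: Hid; exact: hamming_flip.
  apply: leq_trans (geq_minl _ _) _.
  apply: leq_trans (leq_addl _ _).
  have -> : 3 * n = \sum_(i in 'I_n) 3 by rewrite sum_nat_const card_ord mulnC.
  by apply: leq_sum => i _; exact: F3.
Qed.

End Main.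

Section Count.
Local Open Scope nat_scope.
Variable n : nat.

Lemma card_sum (T : finType) (A : {set T}) : #|A| = \sum_x nat_of_bool (x \in A).
Proof.
rewrite -sum1_card big_mkcond /=; apply: eq_bigr => x _; by case: (x \in A).
Qed.

Lemma kE (C : {set word n}) x :
  #|I_set C x| = \sum_(c in C) nat_of_bool (c \in closed_nbhd x).
Proof.
rewrite card_sum [RHS]big_mkcond /=; apply: eq_bigr => y _.
by rewrite /I_set in_setI; case: (y \in C); case: (y \in closed_nbhd x).
Qed.

Lemma key (C : {set word n}) : local_identifying_code C ->
  6 * 2^n + #|C| * minn (3*n) 10 <= 6 * (#|C| * n.+1).
Proof.
move=> HC; have [_ [Hdom _]] := HC.
set k := fun x : word n => #|I_set C x|.
have S1 : \sum_x k x = #|C| * n.+1.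
  rewrite /k; under eq_bigr => x _ do rewrite kE.
  rewrite exchange_big /= -sum_nat_const; apply: eq_bigr => c Hc.
  rewrite -(card_nbhd c) card_sum; apply: eq_bigr => x _; by rewrite nbhd_sym.
have S2 : #|C| * minn (3*n) 10 <= \sum_x k x * s (k x).
  rewrite (eq_bigr (fun x => \sum_(c in C) nat_of_bool (c \in closed_nbhd x) * s (k x))); last first.
    by move=> x _; rewrite /k kE big_distrl.
  rewrite exchange_big /= -sum_nat_const; apply: leq_sum => c Hc.
  apply: leq_trans (T_bound HC Hc) _.
  rewrite big_mkcond /=; apply: leq_sum => x _; rewrite nbhd_sym.
  by case: (c \in closed_nbhd x); rewrite ?mul1n ?mul0n.
have S3 : \sum_x (6 + k x * s (k x)) <= \sum_x 6 * k x.
  apply: leq_sum => x _; apply: s_bound; by rewrite /k card_gt0 Hdom.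
rewrite big_split /= sum_nat_const card_ffun card_bool card_ord -big_distrr /= S1 in S3.
apply: leq_trans _ S3; by rewrite mulnC leq_add2l.
Qed.

End Count.


Theorem mainTheorem5 (n : nat) (hn : (3 <= n)%N) (C : {set word n}) :
  local_identifying_code C ->
  ((3 * 2 ^ n)%N%:R / (3 * n%:R - 2) <= #|C|%:R :> rat).
Proof.
move=> HC.
have K := key HC.
have Hnat : (3 * 2^n <= (3*n - 2) * #|C|)%N.
  case: (eqVneq n 3) => [En|Hn4].
    subst n; move: K; rewrite (_ : 2^3 = 8)%N //; lia.
  have Em : minn (3*n) 10 = 10 by lia.
  rewrite Em in K; move: K; move: (2^n)%N => P; nia.
have E : (3 * n%:R - 2 : rat) = (3*n-2)%N%:R.
  rewrite natrB; last by lia.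
  by rewrite natrM.
rewrite E ler_pdivrMr ?ltr0n; last by lia.
rewrite -natrM ler_nat; by rewrite [(#|C| * _)%N]mulnC.
Qed.
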